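(* Let $X$ be a random lifetime. (i) For all $t\in\mathcal S$, $$\overline H^w(t)\le \mu(t)\log\frac{t^2}{2\mu(t)}.$$ (ii) If the reversed hazard rate $\tau(t)$ is decreasing in $t\in\mathcal S$, then for all $t\in\mathcal S$, $$\overline H^w(t)\le \int_0^t x\,\tau(x)\,dx-\mu(t)\,\big[1+\log\tau(t)\big].$$
   Context: $X$ is an absolutely continuous non-negative random variable with density $f$, support $\mathcal S=(0,\nu)$, $\nu\le+\infty$, distribution function $F$ and reversed hazard rate $\tau(t)=f(t)/F(t)$; ''decreasing'' means non-increasing; $\log$ is the natural logarithm. Weighted past entropy: $\overline H^w(t)=-\int_0^{t}x\,\frac{f(x)}{F(t)}\log\frac{f(x)}{F(t)}\,dx$. Mean past lifetime: $\mu(t)=\mathrm{E}(X\mid X\le t)=\int_0^t x\frac{f(x)}{F(t)}\,dx$. *)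

(* Defs.v *)
From HB Require Import structures.
From mathcomp Require Import all_boot all_order all_algebra.
From mathcomp Require Import all_classical all_reals all_analysis.
Set Implicit Arguments. Unset Strict Implicit. Unset Printing Implicit Defensive.
Import Order.TTheory GRing.Theory Num.Theory.
Local Open Scope classical_set_scope.
Local Open Scope ring_scope.

(* Density-based description of a random lifetime with support (0, nu). *)
Section Lifetime.
Variable R : realType.
Variable f : R -> R.
Variable nu : \bar R.

Definition supp : set R := [set x | 0 < x /\ (x%:E < nu)%E].

Definition is_lifetime_density : Prop :=
  (0 < nu)%E /\
  measurable_fun setT f /\
  (forall x, supp x -> 0 < f x) /\
  (forall x, ~ supp x -> f x = 0) /\
  (\int[lebesgue_measure]_x (f x)%:E = 1)%E.

Definition cdf (t : R) : R := Rintegral lebesgue_measure `]-oo, t] f.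

Definition rhr (t : R) : R := f t / cdf t.

Definition mpl (t : R) : R :=
  Rintegral lebesgue_measure `[0, t] (fun x => x * (f x / cdf t)).

Definition wpast_entropy (t : R) : \bar R :=
  (- \int[lebesgue_measure]_(x in `[0%R, t])
       (x * (f x / cdf t) * ln (f x / cdf t))%:E)%E.

End Lifetime.

(* Main.v *)
Require Import Defs.
From HB Require Import structures.
From mathcomp Require Import all_boot all_order all_algebra all_classical all_reals all_analysis.
From mathcomp Require Import measurable_realfun lra ring.
Import Order.TTheory GRing.Theory Num.Theory numFieldNormedType.Exports.
Local Open Scope classical_set_scope.
Local Open Scope ring_scope.

Lemma measurable_inv (R : realType) : measurable_fun [set: R] (fun x : R => x^-1).
Proof.
have -> : [set: R] = ~` [set 0] `|` [set 0] by rewrite setUC setUv.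
have c1 : closed [set (0:R^o)].
  apply: accessible_closed_set1; apply: hausdorff_accessible; exact: Rhausdorff.
apply/measurable_funU => //.
- by apply: measurable_realfun.open_measurable; exact: closed_openC.
split; last exact: measurable_fun_set1.
apply: measurable_realfun.open_continuous_measurable_fun; first exact: closed_openC.
move=> x; rewrite inE /= => /eqP x0; exact: inv_continuous.
Qed.

Section M.
Context {R : realType}.
Notation mu := (@lebesgue_measure R).

Lemma le_integral_meas (D : set R) (f g : R -> \bar R) : measurable D ->
  measurable_fun D f -> measurable_fun D g ->
  (forall x, D x -> (f x <= g x)%E) ->
  (\int[mu]_(x in D) f x <= \int[mu]_(x in D) g x)%E.
Proof.
move=> mD mf mg fg0.
have fg : {in D, forall x, (f x <= g x)%E} by move=> x /set_mem; exact: fg0.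
rewrite integralE [leRHS]integralE leeB//.
- apply: ge0_le_integral => //.
  + exact: measurable_funepos.
  + exact: measurable_funepos.
  + by move=> x Dx; exact: (funepos_le fg (mem_set Dx)).
- apply: ge0_le_integral => //.
  + exact: measurable_funeneg.
  + exact: measurable_funeneg.
  + by move=> x Dx; exact: (funeneg_le fg (mem_set Dx)).
Qed.

Lemma cF : continuous (fun x : R => x ^+ 2 / 2).
Proof.
move=> x.
apply: (@continuousM _ _ (fun x : R => x ^+ 2) (fun=> 2^-1)).
  exact: exprn_continuous.
exact: cst_continuous.
Qed.

Lemma integral_id01 (t : R) : 0 < t ->
  (\int[mu]_(x in `[0%R, t]) x%:E = (t ^+ 2 / 2)%:E)%E.
Proof.
move=> t0.
rewrite (@continuous_FTC2 R id (fun x => x ^+ 2 / 2) 0 t t0).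
- by rewrite expr0n /= mul0r oppr0 adde0.
- exact: (@continuous_subspaceT R^o R^o _ (@id R) (fun x => cvg_id)).
- split.
  + move=> x _; apply: derivableM => //; exact: derivableX.
  + exact: cvg_at_right_filter (cF 0).
  + exact: cvg_at_left_filter (cF t).
- move=> x _ /=; rewrite derive1E deriveM//= ?deriveX //=.
  rewrite derive_cst exp_derive scaler0 add0r /= expr1 .
  by rewrite /GRing.scale /= mulr1 mulrA mulVf ?mul1r // pnatr_eq0.
Qed.
End M.

Lemma P1 (R : realType) (x g c : R) : 0 <= x -> 0 <= g -> 0 < c ->
  (1 + ln c) * (x * g) - c * x <= x * g * ln g.
Proof.
move=> x0 g0 c0.
have [->|gp] := eqVneq g 0.
  rewrite !mulr0 mul0r add0r; nra.
have gp' : 0 < g by rewrite lt_neqAle eq_sym gp g0.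
have h1 : ln (c / g) <= c / g - 1.
  have := @le_ln1Dx R (c / g - 1); rewrite (_ : 1 + (c / g - 1) = c / g); last by ring.
  apply.
  have : 0 < c / g by exact: divr_gt0.
  lra.
rewrite ln_div ?posrE // in h1.
have h2 : x * g * (ln c - ln g) <= x * g * (c / g - 1).
  by apply: ler_wpM2l => //; exact: mulr_ge0.
have h3 : x * g * (c / g - 1) = c * x - x * g.
  by field; rewrite gp.
lra.
Qed.

Lemma P2 (R : realType) (x g a b : R) : 0 <= x -> 0 <= g -> 0 <= a ->
  (0 < g -> 0 < x -> 0 < b /\ b <= a) ->
  (1 + ln b) * (x * g) - a * x <= x * g * ln g.
Proof.
move=> x0 g0 a0 hb.
have [->|gp] := eqVneq g 0.
  rewrite !mulr0 mul0r add0r; nra.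
have gp' : 0 < g by rewrite lt_neqAle eq_sym gp g0.
have [->|xp] := eqVneq x 0.
  rewrite !mul0r !mulr0; lra.
have xp' : 0 < x by rewrite lt_neqAle eq_sym xp x0.
have [b0 ba] := hb gp' xp'.
have a0' : 0 < a by apply: lt_le_trans ba.
have := @P1 R x g a x0 g0 a0'.
have : ln b <= ln a by rewrite ler_ln ?posrE.
have : 0 <= x * g by exact: mulr_ge0.
nra.
Qed.

Section Main.
Context {R : realType} (f : R -> R) (nu : \bar R).
Hypothesis H : is_lifetime_density f nu.
Notation mu := (@lebesgue_measure R).

Lemma f_ge0 x : 0 <= f x.
Proof.
case: H => _ [_ [fp [f0 _]]].
have [s|ns] := pselect (supp nu x); first exact/ltW/fp.
by rewrite f0.
Qed.

Lemma mf : measurable_fun setT f.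
Proof. by case: H => _ [? _]. Qed.

Lemma f_int : mu.-integrable setT (EFin \o f).
Proof.
case: H => _ [mf' [_ [_ i1]]].
apply/integrableP; split; first exact/measurable_EFinP.
under eq_integral do rewrite /= ger0_norm ?f_ge0 //.
by rewrite i1 ltry.
Qed.

Lemma f_intD D : measurable D -> mu.-integrable D (EFin \o f).
Proof. by move=> mD; apply: integrableS f_int. Qed.

Lemma cdf_ge0 x : 0 <= Defs.cdf f x.
Proof. by apply: Rintegral_ge0 => y _; exact: f_ge0. Qed.

Lemma cdf_nd : nondecreasing_fun (Defs.cdf f).
Proof.
move=> x y xy; rewrite /Defs.cdf /Rintegral.
apply: fine_le; [by apply: integrable_fin_num => //; exact: f_intD|
                 by apply: integrable_fin_num => //; exact: f_intD|].
apply: ge0_subset_integral => //.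
- by apply/measurable_EFinP; apply: measurable_funS mf.
- by move=> z _; rewrite lee_fin f_ge0.
- by apply: subset_itvl; rewrite bnd_simp.
Qed.

Lemma mcdf : measurable_fun setT (Defs.cdf f).
Proof. exact: nondecreasing_measurable cdf_nd. Qed.

Lemma mrhr : measurable_fun setT (rhr f).
Proof.
apply: measurable_funM; first exact: mf.
apply: measurableT_comp mcdf; exact: measurable_inv.
Qed.

Lemma intZ (D : set R) (a : R) (u : R -> R) : measurable D ->
  mu.-integrable D (EFin \o u) -> mu.-integrable D (EFin \o (fun x => a * u x)).
Proof.
move=> mD iu.
have := @integrableZl _ _ _ mu D mD a _ iu.
apply: eq_integrable => //.
Qed.

Lemma integralZ (D : set R) (a : R) (u : R -> R) : measurable D ->
  mu.-integrable D (EFin \o u) ->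
  (\int[mu]_(x in D) (a * u x)%:E = a%:E * \int[mu]_(x in D) (u x)%:E)%E.
Proof.
move=> mD iu; under eq_integral do rewrite EFinM.
exact: integralZl.
Qed.

Section AtT.
Variable t : R.
Hypothesis ht : supp nu t.
Local Notation Ft := (Defs.cdf f t).

Lemma t_gt0 : 0 < t.
Proof. by case: ht. Qed.

Lemma mxg : measurable_fun setT (fun x : R => x * (f x / Ft)).
Proof.
apply: measurable_funM; first exact: measurable_id.
apply: measurable_funM; first exact: mf.
exact: measurable_cst.
Qed.

Lemma xg_int : mu.-integrable `[0, t] (EFin \o (fun x => x * (f x / Ft))).
Proof.
apply: (@le_integrable _ _ _ mu _ _ _ (fun x => ((t / Ft) * f x)%:E)) => //.
- by apply/measurable_EFinP; apply: measurable_funS mxg.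
- move=> x; rewrite /= in_itv /= => /andP[x0 xt].
  have Fg := cdf_ge0 t.
  have f0 := f_ge0 x.
  have t0 : 0 <= t by exact: ltW t_gt0.
  have h1 : 0 <= t / Ft * f x by apply: mulr_ge0 => //; apply: divr_ge0.
  have h2 : 0 <= x * (f x / Ft) by apply: mulr_ge0 => //; apply: divr_ge0.
  rewrite lee_fin !ger0_norm //.
  have h3 : 0 <= f x / Ft by apply: divr_ge0.
  rewrite (_ : t / Ft * f x = t * (f x / Ft)); last by ring.
  exact: ler_wpM2r.
- by apply: intZ => //; exact: f_intD.
Qed.

Lemma mpl_E : (\int[mu]_(x in `[0%R, t]) (x * (f x / Ft))%:E = (mpl f t)%:E)%E.
Proof.
by rewrite /mpl /Rintegral fineK //; apply: integrable_fin_num => //; exact: xg_int.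
Qed.

Lemma id_int : mu.-integrable `[0, t] (EFin \o (fun x : R => x)).
Proof.
apply/integrableP; split; first by apply/measurable_EFinP; exact: measurable_id.
rewrite (_ : (\int[mu]_(x in _) _ = \int[mu]_(x in `[0%R, t]) x%:E)%E); last first.
  apply: eq_integral => x; rewrite inE /= in_itv /= => /andP[x0 _].
  by rewrite ger0_norm.
by rewrite integral_id01 ?ltry // t_gt0.
Qed.

Lemma mphi : measurable_fun `[0, t]
  (fun x => (x * (f x / Ft) * ln (f x / Ft))%:E).
Proof.
apply/measurable_EFinP; apply: measurable_funS (_ : measurable_fun setT _) => //.
apply: measurable_funM; first exact: mxg.
apply: measurableT_comp; first exact: measurable_ln.
apply: measurable_funM; first exact: mf.
exact: measurable_cst.
Qed.

Lemma mpl_ge0 : 0 <= mpl f t.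
Proof.
apply: Rintegral_ge0 => x; rewrite /= in_itv /= => /andP[x0 _].
by apply: mulr_ge0 => //; apply: divr_ge0; [exact: f_ge0|exact: cdf_ge0].
Qed.

Lemma bound_c c : 0 < c ->
  (wpast_entropy f t <= (c * (t ^+ 2 / 2) - mpl f t - mpl f t * ln c)%:E)%E.
Proof.
move=> c0.
rewrite /wpast_entropy leeNl.
have -> : (- (c * (t ^+ 2 / 2) - mpl f t - mpl f t * ln c)%:E =
  \int[mu]_(x in `[0%R, t]) ((1 + ln c) * (x * (f x / Ft)) - c * x)%:E)%E.
  under eq_integral do rewrite EFinB.
  rewrite integralB_EFin //; last 2 first.
  - by apply: intZ => //; exact: xg_int.
  - by apply: intZ => //; exact: id_int.
  rewrite integralZ //; last exact: xg_int.
  rewrite integralZ //; last exact: id_int.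
  rewrite mpl_E integral_id01; last exact: t_gt0.
  rewrite -!EFinM -EFinB; congr (_%:E); ring.
apply: le_integral_meas => //.
- apply/measurable_EFinP; apply: measurable_funS (_ : measurable_fun setT _) => //.
  apply: measurable_funB.
    apply: measurable_funM; first exact: measurable_cst.
    exact: mxg.
  apply: measurable_funM; first exact: measurable_cst.
  exact: measurable_id.
- exact: mphi.
- move=> x; rewrite /= in_itv /= => /andP[x0 _].
  rewrite lee_fin; apply: P1 => //.
  by apply: divr_ge0; [exact: f_ge0|exact: cdf_ge0].
Qed.

Lemma part_i : (wpast_entropy f t <= (mpl f t * ln (t ^+ 2 / (2 * mpl f t)))%:E)%E.
Proof.
have tp := t_gt0.
have t2 : 0 < t ^+ 2 by exact: exprn_gt0.
have [m0|mp] := eqVneq (mpl f t) 0.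
  rewrite m0 mul0r; apply/lee_addgt0Pr => e e0.
  have c0 : 0 < 2 * e / t ^+ 2 by apply: divr_gt0 => //; apply: mulr_gt0.
  apply: le_trans (bound_c _ c0) _.
  rewrite m0 mul0r !subr0 add0e lee_fin le_eqVlt; apply/orP; left; apply/eqP.
  by field; rewrite gt_eqF.
have mp' : 0 < mpl f t by rewrite lt_neqAle eq_sym mp mpl_ge0.
have c0 : 0 < 2 * mpl f t / t ^+ 2 by apply: divr_gt0 => //; apply: mulr_gt0.
apply: le_trans (bound_c _ c0) _.
rewrite -[t ^+ 2 / (2 * mpl f t)]invf_div lnV ?posrE //.
rewrite lee_fin le_eqVlt; apply/orP; left; apply/eqP.
have -> : 2 * mpl f t / t ^+ 2 * (t ^+ 2 / 2) = mpl f t by field; rewrite gt_eqF.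
ring.
Qed.

Lemma part_ii :
  (forall x y, supp nu x -> supp nu y -> x <= y -> rhr f y <= rhr f x) ->
  (wpast_entropy f t <=
        \int[lebesgue_measure]_(x in `[0%R, t]) (x * rhr f x)%:E
        - (mpl f t * (1 + ln (rhr f t)))%:E)%E.
Proof.
move=> Hd.
have tp := t_gt0.
have rhr0 x : 0 <= rhr f x by apply: divr_ge0; [exact: f_ge0|exact: cdf_ge0].
have mI : measurable_fun `[0%R, t] (fun x : R => x * rhr f x).
  apply: measurable_funS (_ : measurable_fun setT _) => //.
  apply: measurable_funM; first exact: measurable_id.
  exact: mrhr.
set I := (\int[lebesgue_measure]_(x in `[0%R, t]) (x * rhr f x)%:E)%E.
have I0 : (0 <= I)%E.
  apply: integral_ge0 => x; rewrite /= in_itv /= => /andP[x0 _].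
  by rewrite lee_fin; apply: mulr_ge0.
have [Ioo|Ifin] := eqVneq I +oo%E.
  by rewrite Ioo addeC /= leey.
have [r Ir] : exists r, I = r%:E.
  by move: I0 Ifin; case: I => [r| |] //; exists r.
have iI : mu.-integrable `[0%R, t] (EFin \o (fun x : R => x * rhr f x)).
  apply/integrableP; split; first exact/measurable_EFinP.
  rewrite (_ : (\int[mu]_(x in _) _ = I)%E); first by rewrite Ir ltry.
  apply: eq_integral => x; rewrite inE /= in_itv /= => /andP[x0 _].
  by rewrite ger0_norm //; apply: mulr_ge0.
rewrite Ir /wpast_entropy leeNl.
have -> : (- (r%:E - (mpl f t * (1 + ln (rhr f t)))%:E) =
  \int[mu]_(x in `[0%R, t]) ((1 + ln (rhr f t)) * (x * (f x / Ft)) - x * rhr f x)%:E)%E.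
  under eq_integral do rewrite EFinB.
  rewrite integralB_EFin //; last first.
    by apply: intZ => //; exact: xg_int.
  rewrite integralZ //; last exact: xg_int.
  rewrite mpl_E -/I Ir.
  rewrite -!EFinM -!EFinB -EFinN; congr (_%:E); ring.
apply: le_integral_meas => //.
- apply/measurable_EFinP; apply: measurable_funS (_ : measurable_fun setT _) => //.
  apply: measurable_funB.
    apply: measurable_funM; first exact: measurable_cst.
    exact: mxg.
  apply: measurable_funM; first exact: measurable_id.
  exact: mrhr.
- exact: mphi.
- move=> x; rewrite /= in_itv /= => /andP[x0 xt].
  rewrite lee_fin [x * rhr f x]mulrC; apply: P2 => //.
  + by apply: divr_ge0; [exact: f_ge0|exact: cdf_ge0].
  + move=> gp xp.
    have Fp : 0 < Ft.
      rewrite lt_neqAle eq_sym cdf_ge0 andbT; apply/negP => /eqP F0.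
      by move: gp; rewrite F0 invr0 mulr0 ltxx.
    have sx : supp nu x.
      split => //; have : (t%:E < nu)%E by case: ht.
      by apply: le_lt_trans; rewrite lee_fin.
    split; last exact: Hd.
    apply: divr_gt0 => //.
    by case: H => _ [_ [fp _]]; apply: fp.
Qed.

End AtT.
End Main.

Theorem theorem3p4 (R : realType) (f : R -> R) (nu : \bar R) :
  is_lifetime_density f nu ->
  (forall t, supp nu t ->
     (wpast_entropy f t <= (mpl f t * ln (t ^+ 2 / (2 * mpl f t)))%:E)%E) /\
  ((forall x y, supp nu x -> supp nu y -> x <= y -> rhr f y <= rhr f x) ->
   forall t, supp nu t ->
     (wpast_entropy f t <=
        \int[lebesgue_measure]_(x in `[0%R, t]) (x * rhr f x)%:E
        - (mpl f t * (1 + ln (rhr f t)))%:E)%E).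
Proof.
move=> H; split.
- by move=> t ht; exact: (@part_i R f nu H t ht).
- by move=> Hd t ht; exact: (@part_ii R f nu H t ht Hd).
Qed.
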